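(* First-order logic is closed under inverse morphisms of $\mathbb{T}$-algebras: for all alphabets $\Sigma,\Gamma$, every morphism $\varphi:\mathbb{T}\Sigma\to\mathbb{T}\Gamma$ of $\mathbb{T}$-algebras, and every $\mathrm{FO}$-definable language $K\subseteq\mathbb{T}_n\Gamma$, the language $\varphi^{-1}[K]$ is $\mathrm{FO}$-definable.
   Context: Sorts are $\omega$ (arities). For an alphabet (finite unordered $\omega$-sorted set) $\Sigma$ and $n<\omega$, $\mathbb{T}_n\Sigma$ is the set of finite or infinite trees with ordered successors labelled by elements of $\Sigma$ or variables $x_0,\dots,x_{n-1}$ (arity $0$), where a vertex with label in $\Sigma_k$ has exactly $k$ successors, variables label leaves only, each variable occurs at most once, and the root is labelled by an element of $\Sigma$. $\mathbb{T}$ is a monad with $\mathrm{sing}(a)=a(x_0,\dots,x_{k-1})$ for $a$ of arity $k$, and $\mathrm{flat}$ which, for a tree of trees, replaces each vertex $v$ by its label tree $T(v)$, connecting its $x_i$-leaf to the root of the tree replacing the $(i+1)$-st successor of $v$. A $\mathbb{T}$-algebra morphism $\varphi:\mathbb{T}\Sigma\to\mathbb{T}\Gamma$ is a sort-preserving map commuting with $\mathrm{flat}$ (equivalently determined by $\varphi\circ\mathrm{sing}:\Sigma\to\mathbb{T}\Gamma$). A tree $t\in\mathbb{T}_n\Sigma$ is identified with the structure $\langle\mathrm{dom}(t),\preceq,(S_i)_{i<\omega},(P_c)_{c\in\Sigma},(Q_i)_{i<n},R\rangle$ ($\preceq$ tree order with root least, $S_i$ $i$-th successor relation, $P_c$ vertices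 labelled $c$, $Q_i$ vertices labelled $x_i$, $R$ the root). $K\subseteq\mathbb{T}_n\Sigma$ is FO-definable if it is the set of trees in $\mathbb{T}_n\Sigma$ satisfying some first-order sentence over this signature. *)

(* Defs.v *)
From HB Require Import structures.
From mathcomp Require Import all_boot.

Set Implicit Arguments.
Unset Strict Implicit.
Unset Printing Implicit Defensive.

(* omega-sorted sets are given as a carrier A with an arity map ar.    *)
(* An alphabet is such a sorted set whose carrier is a finType.        *)
(* Vertices of trees are addresses (seq nat); the i-th successor       *)
(* (0-indexed, i.e. the (i+1)-st one) of v is rcons v i.               *)
(* A (raw) tree in T_n A is a partial labelling of addresses by        *)
(* elements of A or by variables x_0..x_{n-1} ('I_n).                  *)

Definition rtree (A : Type) (n : nat) := seq nat -> option (A + 'I_n).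

Definition lar (A : Type) (ar : A -> nat) (n : nat) (l : A + 'I_n) : nat :=
  match l with inl a => ar a | inr _ => 0 end.

Definition is_tree (A : Type) (ar : A -> nat) (n : nat) (t : rtree A n) : Prop :=
  (exists a, t [::] = Some (inl a)) /\
  (* domain prefix closed, a vertex labelled l has exactly (lar l)
     successors, namely the rcons v i with i < lar l *)
  (forall v i, t (rcons v i) <> None <-> exists l, t v = Some l /\ i < lar ar l) /\
  (forall v w (j : 'I_n), t v = Some (inr j) -> t w = Some (inr j) -> v = w).

Definition Tn (A : Type) (ar : A -> nat) (n : nat) := {t : rtree A n | is_tree ar t}.

Definition TA (A : Type) (ar : A -> nat) := {k : nat & Tn ar k}.
Definition TA_ar (A : Type) (ar : A -> nat) (s : TA ar) : nat := projT1 s.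

(* A vertex of flat T is reached by walking: we are inside the label
   tree s = T(v) at a vertex u (labelled in A); moving to the i-th
   successor of u either stays in s, or hits a leaf x_j of s, in which
   case we jump to the root of the label tree of the j-th successor of v
   in T (or to the variable x_m if that successor is labelled x_m). *)

Inductive fstate (n : nat) := FInside of seq nat & seq nat | FAtVar of 'I_n | FDead.

Definition flat_step (A : Type) (ar : A -> nat) (n : nat)
    (T : rtree (TA ar) n) (st : fstate n) (i : nat) : fstate n :=
  match st with
  | FInside v u =>
    match T v with
    | Some (inl s) =>
      match sval (projT2 s) (rcons u i) with
      | Some (inl _) => FInside n v (rcons u i)
      | Some (inr j) =>
        match T (rcons v (nat_of_ord j)) with
        | Some (inl _) => FInside n (rcons v (nat_of_ord j)) [::]
        | Some (inr m) => FAtVar m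
        | None => FDead n
        end
      | None => FDead n
      end
    | _ => FDead n
    end
  | _ => FDead n
  end.

Definition flat (A : Type) (ar : A -> nat) (n : nat) (T : rtree (TA ar) n) : rtree A n :=
  fun w =>
    match foldl (flat_step T) (FInside n [::] [::]) w with
    | FInside v u =>
      match T v with
      | Some (inl s) =>
        match sval (projT2 s) u with
        | Some (inl a) => Some (inl a)
        | _ => None
        end
      | _ => None
      end
    | FAtVar m => Some (inr m)
    | FDead => None
    end.

(* the functor T on a sort-preserving map phi : T A -> T B (relabelling) *)
Definition lift_sorted (A B : Type) (ar : A -> nat) (br : B -> nat)
    (phi : forall k, Tn ar k -> Tn br k) (s : TA ar) : TA br :=
  existT (fun k => Tn br k) (projT1 s) (phi (projT1 s) (projT2 s)).

Definition Tmap (A B : Type) (ar : A -> nat) (br : B -> nat)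
    (phi : forall k, Tn ar k -> Tn br k) (n : nat) (T : rtree (TA ar) n)
    : rtree (TA br) n :=
  fun w => match T w with
           | Some (inl s) => Some (inl (lift_sorted phi s))
           | Some (inr j) => Some (inr j)
           | None => None
           end.

(* The hypothesis H
   (that flat T is a tree, which always holds) is only used to form the
   element flat T of T_n A. *)
Definition talg_morph (A B : Type) (ar : A -> nat) (br : B -> nat)
    (phi : forall k, Tn ar k -> Tn br k) : Prop :=
  forall (n : nat) (T : Tn (@TA_ar A ar) n) (H : is_tree ar (flat (sval T))),
    sval (phi n (exist _ (flat (sval T)) H)) = flat (Tmap phi (sval T)).

(* signature: <=, S_i (i < omega), P_c (c in A), Q_i (i < n), R, and
   equality; first-order variables are natural numbers. *)

Inductive fo (A : Type) (n : nat) : Type :=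
| FEq of nat & nat
| FLe of nat & nat
| FSucc of nat & nat & nat   (* FSucc i x y : y is the i-th successor of x *)
| FLab of A & nat
| FVarl of 'I_n & nat
| FRoot of nat
| FFalse
| FImp of fo A n & fo A n
| FEx of nat & fo A n.

Fixpoint sat (A : Type) (n : nat) (t : rtree A n) (e : nat -> seq nat)
    (f : fo A n) : Prop :=
  match f with
  | FEq x y => e x = e y
  | FLe x y => prefix (e x) (e y)
  | FSucc i x y => e y = rcons (e x) i
  | FLab c x => t (e x) = Some (inl c)
  | FVarl j x => t (e x) = Some (inr j)
  | FRoot x => e x = [::]
  | FFalse => False
  | FImp f g => sat t e f -> sat t e g
  | FEx x f => exists v, t v <> None /\ sat t (fun y => if y == x then v else e y) f
  end.

Fixpoint free (A : Type) (n : nat) (x : nat) (f : fo A n) : bool :=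
  match f with
  | FEq y z => (x == y) || (x == z)
  | FLe y z => (x == y) || (x == z)
  | FSucc _ y z => (x == y) || (x == z)
  | FLab _ y => x == y
  | FVarl _ y => x == y
  | FRoot y => x == y
  | FFalse => false
  | FImp f g => free x f || free x g
  | FEx y f => (x != y) && free x f
  end.

Definition sentence (A : Type) (n : nat) (f : fo A n) : Prop := forall x, ~~ free x f.

Definition fo_definable (A : Type) (ar : A -> nat) (n : nat) (K : Tn ar n -> Prop) : Prop :=
  exists f : fo A n, sentence f /\
    forall t : Tn ar n, K t <-> sat (sval t) (fun _ => [::]) f.

(* Main.v *)
From Stdlib Require Import Classical ClassicalEpsilon FunctionalExtensionality ProofIrrelevance.
Require Import Defs.
From mathcomp Require Import all_boot.
Set Implicit Arguments.
Unset Strict Implicit.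
Unset Printing Implicit Defensive.

Definition pb (P : Prop) : bool := if excluded_middle_informative P then true else false.
Lemma pbE (P : Prop) : pb P <-> P.
Proof. rewrite /pb; case: excluded_middle_informative => //. Qed.
Lemma pbP (P : Prop) : reflect P (pb P).
Proof. apply: (iffP idP); by move/pbE. Qed.

Fixpoint typ (A0 : finType) (N q : nat) : finType :=
  match q with 0 => A0 | q'.+1 => (A0 * {ffun 'I_N -> {set typ A0 N q'}})%type end.

Definition upd (e : nat -> seq nat) (x : nat) (v : seq nat) : nat -> seq nat :=
  fun y => if y == x then v else e y.

Section Tp.
Variables (A0 : finType) (N : nat) (dom : seq nat -> Prop) (atm : (nat -> seq nat) -> A0).
Fixpoint tp (q : nat) (e : nat -> seq nat) : typ A0 N q :=
  match q return typ A0 N q with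
  | 0 => atm e
  | q'.+1 => (atm e, [ffun x : 'I_N => [set tau | pb (exists v, dom v /\ tp q' (upd e x v) = tau)]])
  end.
End Tp.

Definition tatom (A0 : finType) N q : typ A0 N q -> A0 :=
  match q return typ A0 N q -> A0 with 0 => fun a => a | q'.+1 => fun p => p.1 end.

Lemma tatom_tp A0 N dom atm q e : tatom (@tp A0 N dom atm q e) = atm e.
Proof. by case: q. Qed.

Lemma tp_S_set A0 N dom atm dom' atm' q e e' (x : 'I_N) tau :
  @tp A0 N dom atm q.+1 e = @tp A0 N dom' atm' q.+1 e' ->
  forall v, dom v -> @tp A0 N dom atm q (upd e x v) = tau ->
  exists v', dom' v' /\ @tp A0 N dom' atm' q (upd e' x v') = tau.
Proof.
move=> /= [_ H0]; have := congr1 (fun f : {ffun 'I_N -> {set typ A0 N q}} => f x) H0; rewrite /= !ffunE => /setP /(_ tau).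
rewrite !inE => H v Dv Ev; apply/pbE; rewrite -H; apply/pbE; by exists v.
Qed.

Section Comb.
Variables (A : Type) (n : nat).
Definition fneg (f : fo A n) := FImp f (FFalse A n).
Definition ftrue := fneg (FFalse A n).
Definition fand (f g : fo A n) := fneg (FImp f (fneg g)).
Definition for_ (f g : fo A n) := FImp (fneg f) g.
Definition fall x (f : fo A n) := fneg (FEx x (fneg f)).
Definition bigand (l : seq (fo A n)) := foldr fand ftrue l.
Definition bigor (l : seq (fo A n)) := foldr for_ (FFalse A n) l.

Variables (t : rtree A n).
Lemma sat_neg e f : sat t e (fneg f) <-> ~ sat t e f. Proof. by []. Qed.
Lemma sat_and e f g : sat t e (fand f g) <-> sat t e f /\ sat t e g.
Proof. rewrite /=; tauto. Qed.
Lemma sat_or e f g : sat t e (for_ f g) <-> sat t e f \/ sat t e g.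
Proof. rewrite /=; tauto. Qed.
Lemma sat_ex e x f : sat t e (FEx x f) <-> exists v, t v <> None /\ sat t (upd e x v) f.
Proof. by []. Qed.
Lemma sat_all e x f : sat t e (fall x f) <-> forall v, t v <> None -> sat t (upd e x v) f.
Proof.
rewrite /=; split.
- move=> H v Hv; apply: NNPP => H'; apply: H; by exists v.
- move=> H [v [Hv H']]; apply: H'; exact: H.
Qed.
Lemma sat_bigand (I : eqType) (s : seq I) (F : I -> fo A n) e :
  sat t e (bigand (map F s)) <-> forall i, i \in s -> sat t e (F i).
Proof.
elim: s => [|i s IH]; first by split => // _ [].
change (sat t e (fand (F i) (bigand (map F s))) <-> forall j, j \in i :: s -> sat t e (F j)).
rewrite sat_and IH; split.
- move=> [H1 H2] j; rewrite inE => /orP [/eqP -> //|]; exact: H2.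
- move=> H; split; first by apply: H; rewrite mem_head.
  move=> j Hj; apply: H; by rewrite inE Hj orbT.
Qed.
Lemma sat_bigor (I : eqType) (s : seq I) (F : I -> fo A n) e :
  sat t e (bigor (map F s)) <-> exists2 i, i \in s & sat t e (F i).
Proof.
elim: s => [|i s IH]; first by split => // [[]].
change (sat t e (for_ (F i) (bigor (map F s))) <-> exists2 j, j \in i :: s & sat t e (F j)).
rewrite sat_or IH; split.
- move=> [H|[j Hj H]]; first by exists i; rewrite ?mem_head.
  by exists j; rewrite // inE Hj orbT.
- move=> [j]; rewrite inE => /orP [/eqP -> H|Hj H]; [by left|right; by exists j].
Qed.

Definition fvlt N (f : fo A n) := forall y, free y f -> y < N.
Lemma fv_neg N f : fvlt N f -> fvlt N (fneg f).
Proof. by move=> H y /= /orP [/H|]. Qed.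
Lemma fv_and N f g : fvlt N f -> fvlt N g -> fvlt N (fand f g).
Proof. by move=> H1 H2 y /= /orP [/orP [/H1|/orP[/H2|]]|]. Qed.
Lemma fv_or N f g : fvlt N f -> fvlt N g -> fvlt N (for_ f g).
Proof. by move=> H1 H2 y /= /orP [/orP [/H1|]|/H2]. Qed.
Lemma fv_true N : fvlt N ftrue. Proof. by []. Qed.
Lemma fv_bigand N (I : Type) (s : seq I) (F : I -> fo A n) :
  (forall i, fvlt N (F i)) -> fvlt N (bigand (map F s)).
Proof. move=> H; elim: s => [|i s IH] //=; exact: fv_and. Qed.
Lemma fv_bigor N (I : Type) (s : seq I) (F : I -> fo A n) :
  (forall i, fvlt N (F i)) -> fvlt N (bigor (map F s)).
Proof. move=> H; elim: s => [|i s IH] //=; exact: fv_or. Qed.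
Lemma fv_mono N N' f : N <= N' -> fvlt N f -> fvlt N' f.
Proof. move=> H1 H2 y /H2 H; exact: leq_trans H H1. Qed.
End Comb.

Fixpoint okf (A : Type) n N B (f : fo A n) : bool :=
  match f with
  | FEq x y => (x < N) && (y < N)
  | FLe x y => (x < N) && (y < N)
  | FSucc i x y => [&& i < B, x < N & y < N]
  | FLab _ x => x < N
  | FVarl _ x => x < N
  | FRoot x => x < N
  | FFalse => true
  | FImp f g => okf N B f && okf N B g
  | FEx x g => (x < N) && okf N B g
  end.

Fixpoint depth (A : Type) n (f : fo A n) : nat :=
  match f with
  | FImp f g => maxn (depth f) (depth g)
  | FEx _ g => (depth g).+1
  | _ => 0
  end.

Fixpoint maxv (A : Type) n (f : fo A n) : nat :=
  match f with
  | FEq x y | FLe x y | FSucc _ x y => maxn x y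
  | FLab _ x | FVarl _ x | FRoot x => x
  | FFalse => 0
  | FImp f g => maxn (maxv f) (maxv g)
  | FEx x g => maxn x (maxv g)
  end.
Fixpoint maxs (A : Type) n (f : fo A n) : nat :=
  match f with
  | FSucc i _ _ => i
  | FImp f g => maxn (maxs f) (maxs g)
  | FEx x g => maxs g
  | _ => 0
  end.
Lemma okf_max (A : Type) n (f : fo A n) : okf (maxv f).+1 (maxs f).+1 f.
Proof.
suff H : forall N B, maxv f < N -> maxs f < B -> okf N B f by apply: H.
elim: f => /= [x y|x y|i x y|c x|j x|x||f IHf g IHg|x g IHg] N B;
  rewrite ?gtn_max.
- by move=> /andP [-> ->].
- by move=> /andP [-> ->].
- by move=> /andP [-> ->] ->.
- by move=> ->.
- by move=> ->.
- by move=> ->.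
- by [].
- by move=> /andP [H1 H2] /andP [H3 H4]; rewrite IHf ?IHg.
- by move=> /andP [-> H] H'; rewrite IHg.
Qed.

Section Atom.
Variables (X : finType) (n N B : nat).
Definition A0G : finType :=
  ({ffun 'I_N * X -> bool} * {ffun 'I_N * 'I_n -> bool} * {ffun 'I_N * 'I_N -> bool}
   * {ffun 'I_N * 'I_N -> bool} * {ffun 'I_B * 'I_N * 'I_N -> bool} * {ffun 'I_N -> bool})%type.
Definition atomG (t : rtree X n) (e : nat -> seq nat) : A0G :=
  ([ffun p : 'I_N * X => pb (t (e p.1) = Some (inl p.2))],
   [ffun p : 'I_N * 'I_n => pb (t (e p.1) = Some (inr p.2))],
   [ffun p : 'I_N * 'I_N => e p.1 == e p.2],
   [ffun p : 'I_N * 'I_N => prefix (e p.1) (e p.2)],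
   [ffun p : 'I_B * 'I_N * 'I_N => e p.2 == rcons (e p.1.2) p.1.1],
   [ffun x : 'I_N => e x == [::]]).

Definition tpG (t : rtree X n) q e := @tp A0G N (fun v => t v <> None) (atomG t) q e.

Lemma pb_iff (P Q : Prop) : pb P = pb Q -> (P <-> Q).
Proof.
move=> H; split => E.
- have : pb P by apply/pbE. by rewrite H => /pbE.
- have : pb Q by apply/pbE. by rewrite -H => /pbE.
Qed.
Lemma eq_iff (T : eqType) (a b c d : T) : (a == b) = (c == d) -> (a = b <-> c = d).
Proof. by move=> H; split => /eqP E; apply/eqP; [rewrite -H | rewrite H]. Qed.

Lemma G1 (f : fo X n) : okf N B f -> forall q, depth f <= q ->
  forall s s' e e', tpG s q e = tpG s' q e' -> (sat s e f <-> sat s' e' f).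
Proof.
elim: f => [x y|x y|i x y|c x|j x|x||f IHf g IHg|x g IHg] /= Hok q Hq s s' e e' Ht.
all: have Ha := congr1 (@tatom _ _ _) Ht.
all: rewrite /tpG in Ha.
all: rewrite !tatom_tp in Ha.
- move: Hok => /andP [Hx Hy].
  have := congr1 (fun a : A0G => a.1.1.1.2 (Ordinal Hx, Ordinal Hy)) Ha; rewrite /= !ffunE /=.
  exact: eq_iff.
- move: Hok => /andP [Hx Hy].
  have := congr1 (fun a : A0G => a.1.1.2 (Ordinal Hx, Ordinal Hy)) Ha; rewrite /= !ffunE /=.
  by move=> ->.
- move: Hok => /and3P [Hi Hx Hy].
  have := congr1 (fun a : A0G => a.1.2 (Ordinal Hi, Ordinal Hx, Ordinal Hy)) Ha; rewrite /= !ffunE /=.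
  exact: eq_iff.
- have := congr1 (fun a : A0G => a.1.1.1.1.1 (Ordinal Hok, c)) Ha; rewrite /= !ffunE /=.
  exact: pb_iff.
- have := congr1 (fun a : A0G => a.1.1.1.1.2 (Ordinal Hok, j)) Ha; rewrite /= !ffunE /=.
  exact: pb_iff.
- have := congr1 (fun a : A0G => a.2 (Ordinal Hok)) Ha; rewrite /= !ffunE /=.
  exact: eq_iff.
- by [].
- move: Hok => /andP [H1 H2]; rewrite geq_max in Hq; move: Hq => /andP [Hq1 Hq2].
  rewrite (IHf H1 q Hq1 s s' e e' Ht) (IHg H2 q Hq2 s s' e e' Ht); by [].
- move: Hok => /andP [Hx H2]; case: q Hq Ht Ha => // q Hq Ht Ha.
  have Hs : forall s s' e e', tpG s q.+1 e = tpG s' q.+1 e' ->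
     (exists v, s v <> None /\ sat s (fun y => if y == x then v else e y) g) ->
     (exists v, s' v <> None /\ sat s' (fun y => if y == x then v else e' y) g).
    move=> s1 s1' e1 e1' Ht1 [v [Hv Hs1]].
    have [v' [Hv' Ev']] := tp_S_set (x := Ordinal Hx) Ht1 Hv (erefl _).
    exists v'; split => //.
    by apply/(IHg H2 q Hq s1 s1' (upd e1 x v) (upd e1' x v')) => //; rewrite /tpG Ev'.
  split; first exact: Hs.
  by apply: Hs.
Qed.
End Atom.

Section Hint.
Variables (X : finType) (n : nat) (A0 : finType) (N : nat) (alpha : A0 -> fo X n).
Fixpoint chi (q : nat) : typ A0 N q -> fo X n :=
  match q return typ A0 N q -> fo X n with
  | 0 => alpha
  | q'.+1 => fun p =>
     fand (alpha p.1)
       (bigand (map (fun x : 'I_N =>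
           fand (bigand (map (fun sg => FEx x (@chi q' sg)) (enum (p.2 x))))
                (fall x (bigor (map (fun sg => @chi q' sg) (enum (p.2 x))))))
          (enum 'I_N)))
  end.

Lemma fv_chi q tau : (forall a, fvlt N (alpha a)) -> fvlt N (@chi q tau).
Proof.
move=> Ha; elim: q tau => [|q IH] tau //=.
apply: fv_and => //; apply: fv_bigand => x; apply: fv_and.
- apply: fv_bigand => sg y /= /andP [_ /IH //].
- apply: fv_neg => y /= /andP [_]; apply: fv_neg; apply: fv_bigor => sg; exact: IH.
Qed.

Variables (t : rtree X n) (atm : (nat -> seq nat) -> A0).
Definition envok (e : nat -> seq nat) := forall x, x < N -> t (e x) <> None.
Hypothesis Halpha : forall e a, envok e -> (sat t e (alpha a) <-> atm e = a).

Lemma envok_upd e (x : 'I_N) v : envok e -> t v <> None -> envok (upd e x v).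
Proof. by move=> He Hv y Hy; rewrite /upd; case: eqP => // _; apply: He. Qed.

Lemma hint q (tau : typ A0 N q) e : envok e ->
  (sat t e (chi tau) <-> @tp A0 N (fun v => t v <> None) atm q e = tau).
Proof.
elim: q tau e => [|q IH] tau e He; first exact: Halpha.
case: tau => a S.
have -> : @chi q.+1 (a, S) = fand (alpha a)
       (bigand (map (fun x : 'I_N =>
           fand (bigand (map (fun sg => FEx x (@chi q sg)) (enum (S x))))
                (fall x (bigor (map (fun sg => @chi q sg) (enum (S x))))))
          (enum 'I_N))) by [].
have -> : @tp A0 N (fun v => t v <> None) atm q.+1 e = (atm e, [ffun x : 'I_N => [set tau | pb (exists v, t v <> None /\ @tp A0 N (fun v => t v <> None) atm q (upd e x v) = tau)]]) by [].
rewrite sat_and Halpha // sat_bigand.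
have E : forall x : 'I_N, (sat t e (fand (bigand (map (fun sg => FEx x (chi sg)) (enum (S x))))
                (fall x (bigor (map (fun sg => chi sg) (enum (S x)))))) <->
     [set tau | pb (exists v, t v <> None /\ @tp A0 N (fun v => t v <> None) atm q (upd e x v) = tau)] = S x).
  move=> x; rewrite sat_and sat_bigand sat_all; split.
  - move=> [H1 H2]; apply/setP => sg; rewrite inE; apply/idP/idP.
    + move/pbE => [v [Hv Ev]].
      have := H2 v Hv; rewrite sat_bigor => [[sg' Hsg']].
      rewrite IH; last exact: envok_upd. by rewrite Ev => ->; rewrite -mem_enum.
    + rewrite -mem_enum => /H1 /= [v [Hv Hs]]; apply/pbE; exists v; split => //.
      by rewrite -IH //; apply: envok_upd.
  - move=> ES; split.
    + move=> sg; rewrite mem_enum -ES inE => /pbE [v [Hv Ev]] /=.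
      exists v; split => //; rewrite -/(upd e x v) IH //; exact: envok_upd.
    + move=> v Hv; rewrite sat_bigor; exists (@tp A0 N (fun v => t v <> None) atm q (upd e x v)).
      * by rewrite mem_enum -ES inE; apply/pbE; exists v.
      * rewrite IH //; exact: envok_upd.
split.
- move=> [-> H]; congr pair; apply/ffunP => x; rewrite ffunE; apply/E/H; exact: mem_enum.
- move=> [Ea ES]; split => // x _; apply/E; by rewrite -ES ffunE.
Qed.
End Hint.

Lemma prefix_rcons_inv (p v : seq nat) j : prefix p (rcons v j) -> p = rcons v j \/ prefix p v.
Proof.
move=> /prefixP [s]; elim/last_ind: s => [|s k _]; first by rewrite cats0 => ->; left.
rewrite -rcons_cat => /rcons_inj [-> _]; right; exact: prefix_prefix.
Qed.

Lemma prefix_rcons_self (v : seq nat) j : prefix v (rcons v j).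
Proof. exact: prefix_rcons. Qed.

Section TreeFacts.
Variables (A : Type) (ar : A -> nat) (n : nat) (t : rtree A n) (Ht : is_tree ar t).

Lemma tree_child v i : t (rcons v i) <> None -> exists a, t v = Some (inl a) /\ i < ar a.
Proof.
move: Ht => [_ [H _]] /H [[a|j] [-> Hi]] //; by exists a.
Qed.

Lemma tree_child_inv v i a : t v = Some (inl a) -> i < ar a -> t (rcons v i) <> None.
Proof. move: Ht => [_ [H _]] Ev Hi; apply/H; by exists (inl a). Qed.

Lemma tree_root : exists a, t [::] = Some (inl a).
Proof. by case: Ht. Qed.

Lemma tree_var v w j : t v = Some (inr j) -> t w = Some (inr j) -> v = w.
Proof. case: Ht => [_ [_ H]]; exact: H. Qed.

Lemma tree_prefix p w : t w <> None -> prefix p w -> t p <> None.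
Proof.
move=> Hw /prefixP [s Es]; subst w; elim/last_ind: s Hw => [|s i IH]; first by rewrite cats0.
rewrite -rcons_cat => /tree_child [a [Ea _]]; apply: IH; by rewrite Ea.
Qed.

Lemma tree_leaf p w j : t p = Some (inr j) -> prefix p w -> t w <> None -> p = w.
Proof.
move=> Hp /prefixP [[|c s] ->]; first by rewrite cats0.
move=> Hw; have : t (rcons p c) <> None.
  apply: (tree_prefix Hw); by rewrite -cats1 -(cat1s c s) catA prefix_prefix.
by move/tree_child => [a []]; rewrite Hp.
Qed.
End TreeFacts.

Section Sing.
Variables (Sigma : Type) (arS : Sigma -> nat).
Definition sing_f (a : Sigma) : rtree Sigma (arS a) := fun p =>
  match p with
  | [::] => Some (inl a)
  | [:: i] => match (insub i : option 'I_(arS a)) with Some j => Some (inr j) | None => None end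
  | _ => None
  end.
Lemma sing_tree a : is_tree arS (sing_f a).
Proof.
split; first by exists a.
split.
- move=> [|x [|y v]] i /=.
  + case: insubP => [j Hj _|Hi]; split => //.
    * by move=> _; exists (inl a).
    * by move=> [l [[<-] /= H]]; rewrite H in Hi.
  + case: insubP => [j Hj _|Hi]; split => //; by move=> [[c|k] [//= _]].
  + by split => // [[l []]].
- move=> [|x [|y v]] [|x' [|y' w]] j //=.
  all: try by case: insubP.
  case: insubP => // k _ Ek [Ej]; case: insubP => // k' _ Ek' [Ej'].
  by congr cons; rewrite -Ek -Ek' Ej Ej'.
Qed.
Definition sing a : Tn arS (arS a) := exist _ (sing_f a) (sing_tree a).
End Sing.

Section Walk.
Variables (Sigma Gamma : finType) (arS : Sigma -> nat) (arG : Gamma -> nat)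
    (phi : forall k, Tn arS k -> Tn arG k) (n : nat).

Definition L (a : Sigma) : rtree Gamma (arS a) := sval (phi (sing arS a)).
Lemma HL a : is_tree arG (L a). Proof. exact: proj2_sig. Qed.
Lemma L_root a : exists g, L a [::] = Some (inl g). Proof. exact: tree_root (HL a). Qed.

Definition T0 (t : rtree Sigma n) : rtree (TA arS) n := fun v =>
  match t v with
  | Some (inl a) => Some (inl (existT (fun k => Tn arS k) (arS a) (sing arS a)))
  | Some (inr j) => Some (inr j)
  | None => None
  end.

Definition Tphi (t : rtree Sigma n) := Tmap phi (T0 t).

Definition occ (a : Sigma) (j : nat) := exists p (jj : 'I_(arS a)), nat_of_ord jj = j /\ L a p = Some (inr jj).

Variables (t : rtree Sigma n) (Ht : is_tree arS t).

Definition Xst v u : fstate n :=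
  match t v with Some (inl _) => FInside n v u | Some (inr m) => FAtVar m | None => FDead n end.
Definition step := flat_step (Tphi t).
Definition st w := foldl step (FInside n [::] [::]) w.

Lemma step_eq v u i : step (FInside n v u) i =
  match t v with
  | Some (inl a) => match L a (rcons u i) with
                    | Some (inl _) => FInside n v (rcons u i)
                    | Some (inr j) => Xst (rcons v j) [::]
                    | None => FDead n end
  | _ => FDead n end.
Proof.
rewrite /step /flat_step /Tphi /Tmap /T0 /Xst; case: (t v) => [[a|m]|] //=.
rewrite /L; case: (sval (phi (sing arS a)) (rcons u i)) => [[g|j]|] //=.
by case: (t (rcons v j)) => [[b|m]|].
Qed.

Lemma step_dead X i : (forall v u, X <> FInside n v u) -> step X i = FDead n.
Proof. case: X => // v u H; by case: (H v u). Qed.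

Lemma st_rcons w i : st (rcons w i) = step (st w) i.
Proof. by rewrite /st foldl_rcons. Qed.
Lemma st_cat w r : st (w ++ r) = foldl step (st w) r.
Proof. by rewrite /st foldl_cat. Qed.
Lemma foldl_dead r : foldl step (FDead n) r = FDead n.
Proof. by elim: r. Qed.

Definition Alive v := forall v0 j, prefix (rcons v0 j) v -> forall a, t v0 = Some (inl a) -> occ a j.
Definition valid v u := t v <> None /\ Alive v /\
  match t v with Some (inl a) => exists g, L a u = Some (inl g) | Some (inr _) => u = [::] | None => False end.

Lemma Alive_root : Alive [::].
Proof. move=> v0 j; rewrite prefixs0; by case: v0. Qed.

Lemma Alive_prefix p v : prefix p v -> Alive v -> Alive p.
Proof. move=> Hp Hv v0 j Hj; apply: Hv; exact: prefix_trans Hj Hp. Qed.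

Lemma Alive_child v a j jj p : t v = Some (inl a) -> Alive v -> nat_of_ord jj = j ->
  L a p = Some (inr jj) -> Alive (rcons v j).
Proof.
move=> Ev Hv Ej Ep v0 j0 /prefix_rcons_inv [/rcons_inj [-> ->]|H] b Eb.
- rewrite Ev in Eb; case: Eb => <-; by exists p, jj.
- exact: Hv H b Eb.
Qed.

Lemma valid_Xst v u : valid v u -> Xst v u <> FDead n.
Proof. rewrite /valid /Xst; by case: (t v) => [[a|m]|] [] //. Qed.

Lemma valid_child v a u i j : t v = Some (inl a) -> valid v u -> L a (rcons u i) = Some (inr j) ->
   Xst (rcons v j) [::] <> FDead n -> valid (rcons v j) [::].
Proof.
move=> Ev [_ [Al _]] Ej; rewrite /Xst /valid.
case E: (t (rcons v j)) => [[b|m]|] // _; (split; [by [] | split; [exact: Alive_child Ev Al (erefl _) Ej|]]) => //.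
exact: L_root.
Qed.

Lemma step_valid v u i : valid v u -> step (Xst v u) i <> FDead n ->
  exists v' u', step (Xst v u) i = Xst v' u' /\ valid v' u'.
Proof.
move=> Hv; rewrite {1 2}/Xst.
case Ev: (t v) => [[a|m]|] //; rewrite step_eq Ev.
case El: (L a (rcons u i)) => [[g|j]|] // Hd.
- exists v, (rcons u i); rewrite /Xst Ev; split => //.
  move: Hv => [H1 [H2 _]]; split => //; split => //; rewrite Ev; by exists g.
- exists (rcons v j), [::]; split => //; exact: valid_child Ev Hv El Hd.
Qed.

Lemma st_valid w : st w <> FDead n -> exists v u, st w = Xst v u /\ valid v u.
Proof.
elim/last_ind: w => [|w i IH].
- move=> _; have [a Ea] := tree_root Ht; exists [::], [::].
  rewrite /Xst Ea; split => //; split; first by rewrite Ea.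
  split; first exact: Alive_root. rewrite Ea; exact: L_root.
- rewrite st_rcons => Hd.
  have Hw : st w <> FDead n by move=> E; apply: Hd; rewrite E.
  have [v [u [E Hv]]] := IH Hw; rewrite E in Hd *; exact: step_valid.
Qed.

Lemma Xst_inj_v v u v' u' : Xst v u = Xst v' u' -> Xst v u <> FDead n -> v = v'.
Proof.
rewrite /Xst; case Ev: (t v) => [[a|m]|]; case Ev': (t v') => [[a'|m']|] //.
- by case.
- move=> [Em] _; subst m'; exact: (tree_var Ht Ev Ev').
Qed.

Lemma Xst_inj v u v' u' : valid v u -> valid v' u' -> Xst v u = Xst v' u' -> v = v' /\ u = u'.
Proof.
move=> Hv Hv' E; have Evv := Xst_inj_v E (valid_Xst Hv); subst v'; split => //.
move: Hv Hv' E; rewrite /valid /Xst; case: (t v) => [[a|m]|].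
- by move=> _ _ [].
- by move=> [_ [_ ->]] [_ [_ ->]].
- by move=> [_ [_ []]].
Qed.

Lemma Xst_inl v u : step (Xst v u) 0 = step (Xst v u) 0 -> True. Proof. by []. Qed.

Lemma step_live v u i : step (Xst v u) i <> FDead n -> exists a, t v = Some (inl a).
Proof. rewrite /Xst; case: (t v) => [[a|m]|] //; by exists a. Qed.

Lemma step_inj v u v' u' i i' : valid v u -> valid v' u' ->
  step (Xst v u) i = step (Xst v' u') i' -> step (Xst v u) i <> FDead n ->
  v = v' /\ u = u' /\ i = i'.
Proof.
move=> Hv Hv' E Hd.
have [a Ev] := step_live Hd.
have [a' Ev'] : exists a', t v' = Some (inl a') by apply: (step_live (u := u') (i := i')); rewrite -E.
have X1 : Xst v u = FInside n v u by rewrite /Xst Ev.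
have X2 : Xst v' u' = FInside n v' u' by rewrite /Xst Ev'.
rewrite X1 X2 !step_eq Ev Ev' in E Hd.
move: E Hd.
case El: (L a (rcons u i)) => [[g|j]|]; case El': (L a' (rcons u' i')) => [[g'|j']|] //.
- by move=> [-> /rcons_inj [-> ->]].
- rewrite /Xst; case: (t (rcons v' j')) => [[b|m]|] //; move=> [_]; by case: (u) => [|? ?] /=.
- rewrite /Xst; case: (t (rcons v j)) => [[b|m]|] //; move=> [_]; by case: (u') => [|? ?] /=.
- move=> E Hd; have := Xst_inj_v E Hd => /rcons_inj [Evv Ejj]; subst v'.
  rewrite Ev in Ev'; case: Ev' => Eaa; subst a'.
  have Ej : j = j' by apply: val_inj.
  subst j'; have := tree_var (HL a) El El' => /rcons_inj [-> ->]; by [].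
Qed.

Lemma step_not_root v u i : valid v u -> step (Xst v u) i <> FInside n [::] [::].
Proof.
rewrite /Xst; case Ev: (t v) => [[a|m]|] //; rewrite step_eq Ev.
case: (L a (rcons u i)) => [[g|j]|] //.
- by move=> _ [_]; case: (u).
- by move=> _; rewrite /Xst; case: (t (rcons v j)) => [[b|m]|] //; case; case: (v).
Qed.

Lemma st_root w : st w = FInside n [::] [::] -> w = [::].
Proof.
elim/last_ind: w => // w i _; rewrite st_rcons => E.
have Hw : st w <> FDead n by move=> E'; rewrite E' in E.
have [v [u [E' Hv]]] := st_valid Hw; rewrite E' in E; by case: (@step_not_root v u i Hv E).
Qed.

Lemma st_inj w1 w2 : st w1 = st w2 -> st w1 <> FDead n -> w1 = w2.
Proof.
elim/last_ind: w1 w2 => [|w1 i IH] w2.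
- by move=> E _; apply/esym/st_root; rewrite -E.
- elim/last_ind: w2 => [|w2 i' _].
  + move=> E _; exact: st_root.
  + rewrite !st_rcons => E Hd.
    have Hw1 : st w1 <> FDead n by move=> E'; rewrite E' in Hd.
    have Hw2 : st w2 <> FDead n by move=> E'; rewrite E E' in Hd.
    have [v [u [E1 Hv]]] := st_valid Hw1; have [v' [u' [E2 Hv']]] := st_valid Hw2.
    rewrite E1 E2 in E Hd; have [Evv [Euu Eii]] := step_inj Hv Hv' E Hd.
    subst; rewrite (IH w2) //; by rewrite E1 E2.
Qed.

Lemma walk_inside v a u r : t v = Some (inl a) -> (exists g, L a (u ++ r) = Some (inl g)) ->
  foldl step (FInside n v u) r = FInside n v (u ++ r).
Proof.
move=> Ev; elim/last_ind: r => [|r i IH]; first by rewrite cats0.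
rewrite -rcons_cat foldl_rcons => [[g Eg]].
have [b [Eb _]] : exists b, L a (u ++ r) = Some (inl b) /\ i < arG b.
  by apply: (tree_child (HL a)); rewrite Eg.
rewrite IH; last by exists b.
by rewrite step_eq Ev Eg.
Qed.

Lemma reach_down v1 a1 d : t v1 = Some (inl a1) -> t (v1 ++ d) <> None -> Alive (v1 ++ d) ->
  exists r, foldl step (FInside n v1 [::]) r = Xst (v1 ++ d) [::].
Proof.
move=> E1; elim/last_ind: d => [|d j IH].
- by move=> _ _; exists [::]; rewrite cats0 /Xst E1.
- rewrite -rcons_cat => Hd Al.
  have [a0 [Ea0 Hj]] := tree_child Ht Hd.
  have Al' : Alive (v1 ++ d) by apply: Alive_prefix Al; exact: prefix_rcons.
  have [r0 Er0] : exists r, foldl step (FInside n v1 [::]) r = Xst (v1 ++ d) [::].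
    by apply: IH => //; rewrite Ea0.
  have [p [jj [Ejj Ep]]] := Al (v1 ++ d) j (prefix_refl _) a0 Ea0.
  case/lastP: p Ep => [|p0 i] Ep.
    by have [g Eg] := L_root a0; rewrite Eg in Ep.
  have [b [Eb _]] : exists b, L a0 p0 = Some (inl b) /\ i < arG b.
    by apply: (tree_child (HL a0)); rewrite Ep.
  exists (r0 ++ rcons p0 i); rewrite foldl_cat Er0 /Xst Ea0 foldl_rcons.
  rewrite (walk_inside (u := [::]) Ea0); last by exists b.
  by rewrite step_eq Ea0 /= Ep Ejj.
Qed.

Lemma reach_valid v u : valid v u -> exists w, st w = Xst v u.
Proof.
move=> [Hd [Al Hl]]; have [a0 Ea0] := tree_root Ht.
have [r Er] := reach_down (v1 := [::]) (d := v) Ea0 Hd Al.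
move: Hl Er; rewrite /Xst; case Ev: (t v) => [[a|m]|] //.
- move=> [g Eg] Er; exists (r ++ u); rewrite st_cat /st Er.
  by rewrite (walk_inside (u := [::]) (r := u) Ev) //; exists g.
- move=> _ Er; by exists r.
Qed.

Lemma flat_val w : flat (Tphi t) w =
  match st w with
  | FInside v u => match t v with Some (inl a) => match L a u with Some (inl g) => Some (inl g) | _ => None end | _ => None end
  | FAtVar m => Some (inr m)
  | FDead => None
  end.
Proof.
rewrite /flat /st /step; case: foldl => // v u.
rewrite /Tphi /Tmap /T0; by case: (t v) => [[a|m]|].
Qed.

Lemma flat_Xst w v u : st w = Xst v u -> valid v u ->
  flat (Tphi t) w = match t v with Some (inl a) => match L a u with Some (inl g) => Some (inl g) | _ => None end | Some (inr m) => Some (inr m) | None => None end.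
Proof.
rewrite flat_val => ->; rewrite /Xst /valid; case E: (t v) => [[a|m]|] //= _; by rewrite E.
Qed.

Lemma st_dom w : flat (Tphi t) w <> None <-> st w <> FDead n.
Proof.
split.
- by rewrite flat_val => H E; rewrite E in H.
- move=> Hd; have [v [u [E Hv]]] := st_valid Hd; rewrite (flat_Xst E Hv).
  move: Hv; rewrite /valid; case: (t v) => [[a|m]|].
  + by move=> [_ [_ [g ->]]].
  + by [].
  + by move=> [_ [_ []]].
Qed.
End Walk.

Section Reach.
Variables (Sigma Gamma : finType) (arS : Sigma -> nat) (arG : Gamma -> nat)
    (phi : forall k, Tn arS k -> Tn arG k) (n : nat).
Variables (t : rtree Sigma n) (Ht : is_tree arS t).

Local Notation L := (L phi).
Local Notation Xst := (Xst t).
Local Notation step := (step phi t).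
Local Notation valid := (valid phi t).

Definition cond v u v'' u'' := (v'' = v /\ prefix u u'') \/
  (exists a (jj : 'I_(arS a)) p, t v = Some (inl a) /\ prefix (rcons v jj) v'' /\ L a p = Some (inr jj) /\ prefix u p).

Definition Inv v u Z := Z = FDead n \/ exists v'' u'', Z = Xst v'' u'' /\ valid v'' u'' /\ cond v u v'' u''.

Lemma inv_step v u Z i : Inv v u Z -> Inv v u (step Z i).
Proof.
move=> [->|[v'' [u'' [-> [Hv Hc]]]]]; first by left.
case Ev: (t v'') => [[a|m]|]; last by move: Hv; rewrite /valid Ev => [[_ [_ []]]].
2: by left; rewrite /Xst Ev.
have X1 : Xst v'' u'' = FInside n v'' u'' by rewrite /Xst Ev.
rewrite X1 step_eq Ev.
case El: (L a (rcons u'' i)) => [[g|j]|]; last by left.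
- right; exists v'', (rcons u'' i); split; first by rewrite /Xst Ev.
  split.
  + move: Hv => [H1 [H2 _]]; split => //; split => //; rewrite Ev; by exists g.
  + case: Hc => [[E1 E2]|H]; [left; split => //; apply: prefix_trans E2 _; exact: prefix_rcons | by right].
- case Ed: (Xst (rcons v'' j) [::]) => [v3 u3|m|]; last by left.
  all: right; exists (rcons v'' j), [::]; split => //.
  all: have Hd : Xst (rcons v'' j) [::] <> FDead n by rewrite Ed.
  all: split; first exact: (valid_child Ev Hv El Hd).
  all: right; case: Hc => [[E1 E2]|[a0 [jj [p [E0 [E3 [E4 E5]]]]]]].
  1,3: subst v''; exists a, j, (rcons u'' i); split => //; split; first exact: prefix_refl.
  1,2: split => //; apply: prefix_trans E2 _; exact: prefix_rcons.
  all: exists a0, jj, p; split => //; split => //; apply: prefix_trans E3 _; exact: prefix_rcons.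
Qed.

Lemma inv_foldl v u Z r : Inv v u Z -> Inv v u (foldl step Z r).
Proof. elim: r Z => [|i r IH] Z H //=; apply: IH; exact: inv_step. Qed.

Lemma reach_fwd v u v' u' r : valid v u -> valid v' u' ->
  foldl step (Xst v u) r = Xst v' u' -> cond v u v' u'.
Proof.
move=> Hv Hv'.
case Ev: (t v) => [[a|m]|]; last by move: Hv; rewrite /valid Ev => [[_ [_ []]]].
- move=> E.
  have : Inv v u (foldl step (Xst v u) r).
    apply: inv_foldl; right; exists v, u; split => //; split => //; left; split => //; exact: prefix_refl.
  rewrite E => [[H|[v'' [u'' [E2 [Hv'' Hc]]]]]]; first by case: (valid_Xst Hv' H).
  have [E3 E4] := Xst_inj Ht Hv' Hv'' E2; by subst.
- case: r => [|i r] /=.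
  + move=> E; have [E3 E4] := Xst_inj Ht Hv Hv' E; subst; left; split => //; exact: prefix_refl.
  + rewrite {1}/Xst Ev step_dead // foldl_dead => E; by case: (valid_Xst Hv' (esym E)).
Qed.

Lemma reach_to v1 a1 d u' : t v1 = Some (inl a1) -> valid (v1 ++ d) u' ->
  exists r, foldl step (FInside n v1 [::]) r = Xst (v1 ++ d) u'.
Proof.
move=> E1 [Hd [Al Hl]]; have [r Er] := reach_down Ht E1 Hd Al.
move: Hl Er; rewrite /Xst; case Ev: (t (v1 ++ d)) => [[a|m]|] //.
- move=> [g Eg] Er; exists (r ++ u'); rewrite foldl_cat Er.
  by rewrite (walk_inside (u := [::]) (r := u') Ev) //; exists g.
- move=> _ Er; by exists r.
Qed.

Lemma reach_bwd v u v' u' : valid v u -> valid v' u' -> cond v u v' u' ->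
  exists r, foldl step (Xst v u) r = Xst v' u'.
Proof.
move=> Hv Hv' [[E1 E2]|[a [jj [p [Ea [E3 [E4 E5]]]]]]].
- subst v'; move: Hv Hv'; rewrite /valid /Xst.
  case Ev: (t v) => [[a|m]|].
  + move=> _ [_ [_ [g Eg]]]; move/prefixP: E2 => [r Er]; exists r.
    rewrite (walk_inside Ev) -?Er //; by exists g.
  + by move=> _ _; exists [::].
  + by move=> [_ [_ []]].
- have X1 : Xst v u = FInside n v u by rewrite /Xst Ea.
  rewrite X1.
  case/lastP: p E4 E5 => [|p0 i] E4 E5.
    by have [g Eg] := L_root phi a; rewrite Eg in E4.
  have Hu : exists g, L a u = Some (inl g) by move: Hv; rewrite /valid Ea => [[_ [_ H]]].
  case/prefix_rcons_inv: E5 => [Eu|E5].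
    by move: Hu => [g]; rewrite Eu E4.
  have [b [Eb _]] : exists b, L a p0 = Some (inl b) /\ i < arG b.
    by apply: (tree_child (HL phi a)); rewrite E4.
  move/prefixP: E5 => [r1 Er1].
  have W1 : foldl step (FInside n v u) (rcons r1 i) = Xst (rcons v jj) [::].
    rewrite foldl_rcons (walk_inside Ea) -?Er1; last by exists b.
    by rewrite step_eq Ea E4.
  have Hd : t (rcons v jj) <> None.
    by apply: (tree_prefix Ht _ E3); case: Hv' => [H _].
  case Ej: (t (rcons v jj)) => [[a1|m]|] //.
  + move/prefixP: E3 => [d Ed]; subst v'.
    have [r2 Er2] := reach_to Ej Hv'.
    exists (rcons r1 i ++ r2); rewrite foldl_cat W1 /Xst Ej; exact: Er2.
  + have Ev' : rcons v jj = v' by apply: (tree_leaf Ht Ej E3); case: Hv' => [H _].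
    subst v'; exists (rcons r1 i); rewrite W1.
    by move: Hv'; rewrite /valid Ej => [[_ [_ ->]]].
Qed.

Lemma reach_iff v u v' u' : valid v u -> valid v' u' ->
  ((exists r, foldl step (Xst v u) r = Xst v' u') <-> cond v u v' u').
Proof.
move=> Hv Hv'; split; first by move=> [r]; exact: reach_fwd.
exact: reach_bwd.
Qed.
End Reach.

Section Addr.
Variables (Sigma Gamma : finType) (arS : Sigma -> nat) (arG : Gamma -> nat)
    (phi : forall k, Tn arS k -> Tn arG k) (n : nat).
Variables (t : rtree Sigma n) (Ht : is_tree arS t).

Local Notation L := (L phi).
Local Notation Xst := (Xst t).
Local Notation step := (step phi t).
Local Notation st := (st phi t).
Local Notation valid := (valid phi t).

Lemma valid_root : valid [::] [::].
Proof.
have [a Ea] := tree_root Ht; split; first by rewrite Ea.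
split; first exact: Alive_root. rewrite Ea; exact: L_root.
Qed.

Lemma st_nil : st [::] = Xst [::] [::].
Proof. have [a Ea] := tree_root Ht; by rewrite /Xst Ea. Qed.

Variables (w1 w2 : seq nat) (v1 u1 v2 u2 : seq nat).
Hypotheses (E1 : st w1 = Xst v1 u1) (E2 : st w2 = Xst v2 u2) (V1 : valid v1 u1) (V2 : valid v2 u2).

Lemma addr_eq : w1 = w2 <-> v1 = v2 /\ u1 = u2.
Proof.
split.
- move=> E; apply: (Xst_inj Ht V1 V2); by rewrite -E1 -E2 E.
- move=> [Ev Eu]; subst; apply: (st_inj (phi := phi) Ht); rewrite E1 ?E2 //; exact: valid_Xst V1.
Qed.

Lemma addr_prefix : prefix w1 w2 <-> cond phi t v1 u1 v2 u2.
Proof.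
rewrite -(reach_iff Ht V1 V2); split.
- move/prefixP => [r Er]; exists r; by rewrite -E1 -E2 Er st_cat.
- move=> [r Er]; apply/prefixP; exists r; apply: (st_inj (phi := phi) Ht).
  + by rewrite E2 st_cat E1.
  + rewrite E2; exact: valid_Xst V2.
Qed.

Lemma addr_succ i : w2 = rcons w1 i <-> step (Xst v1 u1) i = Xst v2 u2.
Proof.
split.
- by move=> E; rewrite -E1 -E2 E st_rcons.
- move=> E; apply: (st_inj (phi := phi) Ht).
  + by rewrite E2 st_rcons E1.
  + rewrite E2; exact: valid_Xst V2.
Qed.

Lemma addr_root : w1 = [::] <-> v1 = [::] /\ u1 = [::].
Proof.
split.
- move=> E; apply: (Xst_inj Ht V1 valid_root); by rewrite -E1 E st_nil.
- move=> [Ev Eu]; subst; apply: (st_inj (phi := phi) Ht); first by rewrite E1 st_nil.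
  rewrite E1; exact: valid_Xst V1.
Qed.
End Addr.

Section Decode.
Variables (Sigma Gamma : finType) (arS : Sigma -> nat) (arG : Gamma -> nat)
    (phi : forall k, Tn arS k -> Tn arG k) (n N M B : nat).
Hypothesis HM : forall a, arS a < M.

Local Notation L := (L phi).

Definition A0T : finType :=
  (A0G Sigma n N M * {ffun 'I_M * 'I_N * 'I_N -> bool} * {ffun 'I_N -> bool})%type.

Definition atomT (t : rtree Sigma n) (e : nat -> seq nat) : A0T :=
  (atomG N M t e, [ffun p : 'I_M * 'I_N * 'I_N => prefix (rcons (e p.1.2) p.1.1) (e p.2)],
   [ffun x : 'I_N => pb (Alive phi t (e x))]).

Definition dec (al : A0T) (uu : nat -> seq nat) : A0G Gamma n N B :=
  let: (((((((lab, var), eqv), le), succ), root), dir), alive) := al in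
  ([ffun p : 'I_N * Gamma => [exists a : Sigma, lab (p.1, a) && (L a (uu p.1) == Some (inl p.2))]],
   [ffun p : 'I_N * 'I_n => var p],
   [ffun p : 'I_N * 'I_N => eqv p && (uu p.1 == uu p.2)],
   [ffun p : 'I_N * 'I_N => (eqv p && prefix (uu p.1) (uu p.2)) ||
       [exists a : Sigma, lab (p.1, a) && [exists jj : 'I_M, dir (jj, p.1, p.2) &&
          pb (exists (j : 'I_(arS a)) q, nat_of_ord j = nat_of_ord jj /\ L a q = Some (inr j) /\ prefix (uu p.1) q)]]],
   [ffun p : 'I_B * 'I_N * 'I_N =>
       [exists a : Sigma, lab (p.1.2, a) &&
          match L a (rcons (uu p.1.2) p.1.1) with
          | Some (inl _) => eqv (p.2, p.1.2) && (uu p.2 == rcons (uu p.1.2) p.1.1)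
          | Some (inr j) => [exists jj : 'I_M, (nat_of_ord jj == nat_of_ord j) && succ (jj, p.1.2, p.2)] && (uu p.2 == [::])
          | None => false
          end]],
   [ffun x : 'I_N => root x && (uu x == [::])]).

Variables (t : rtree Sigma n) (Ht : is_tree arS t).
Local Notation Xst := (Xst t).
Local Notation step := (step phi t).
Local Notation st := (st phi t).
Local Notation valid := (valid phi t).
Local Notation S := (flat (Tphi phi t)).

Lemma ex_lab (e : seq nat) (F : Sigma -> bool) :
  [exists a : Sigma, pb (t e = Some (inl a)) && F a] =
  match t e with Some (inl a) => F a | _ => false end.
Proof.
case E: (t e) => [[a|m]|].
- apply/idP/idP.
  + by move/existsP => [a' /andP [/pbE [->]]].
  + by move=> H; apply/existsP; exists a; rewrite H andbT; apply/pbE.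
- by apply/negbTE/negP => /existsP [a' /andP [/pbE E' _]].
- by apply/negbTE/negP => /existsP [a' /andP [/pbE E' _]].
Qed.

Lemma ex_labf (e : nat -> seq nat) (x : 'I_N) (f : 'I_N * Sigma -> bool) (F : Sigma -> bool) :
  (forall p, f p = pb (t (e p.1) = Some (inl p.2))) ->
  [exists a : Sigma, f (x, a) && F a] =
  match t (e x) with Some (inl a) => F a | _ => false end.
Proof. move=> Hf; rewrite -ex_lab; apply: eq_existsb => a; by rewrite Hf. Qed.

Lemma decode_ok e uu w :
  (forall x, x < N -> st (w x) = Xst (e x) (uu x) /\ valid (e x) (uu x)) ->
  atomG N B S w = dec (atomT t e) uu.
Proof.
move=> Hw; rewrite /dec /atomT /atomG.
congr (((((_, _), _), _), _), _); apply/ffunP.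
- move=> [x g]; rewrite !ffunE /=.
  rewrite (ex_labf (e := e)); last by move=> p; rewrite ffunE.
  have [E V] := Hw x (ltn_ord x); rewrite (flat_Xst E V).
  case: (t (e x)) => [[a|m]|].
  + case: (L a (uu x)) => [[g'|j]|]; apply/pbP/eqP => //; by move=> [->].
  + by apply/pbP.
  + by apply/pbP.
- move=> [x m]; rewrite !ffunE /=.
  have [E V] := Hw x (ltn_ord x); rewrite (flat_Xst E V).
  case: (t (e x)) => [[a|m']|]; apply/pbP/pbP => //.
  + by case: (L a (uu x)) => [[g'|j]|].
  + by move=> [->].
  + by move=> [->].
- move=> [x y]; rewrite !ffunE /=.
  have [Ex Vx] := Hw x (ltn_ord x); have [Ey Vy] := Hw y (ltn_ord y).
  apply/idP/idP => [/eqP /(addr_eq Ht Ex Ey Vx Vy) [-> ->]|/andP [/eqP E1 /eqP E2]].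
  + by rewrite !eqxx.
  + by apply/eqP/(addr_eq Ht Ex Ey Vx Vy).
- move=> [x y]; rewrite !ffunE /=.
  rewrite (ex_labf (e := e)); last by move=> p; rewrite ffunE.
  have [Ex Vx] := Hw x (ltn_ord x); have [Ey Vy] := Hw y (ltn_ord y).
  apply/idP/idP.
  + move/(addr_prefix Ht Ex Ey Vx Vy) => [[E1 E2]|[a [jj [p [Ea [E3 [E4 E5]]]]]]].
    * by rewrite E1 eqxx E2.
    * apply/orP; right; rewrite Ea; apply/existsP; exists (widen_ord (ltnW (HM a)) jj).
      rewrite ffunE E3 /=; apply/pbE; by exists jj, p.
  + move/orP => [/andP [/eqP E1 E2]|].
    * apply/(addr_prefix Ht Ex Ey Vx Vy); left; by split.
    * case Ea: (t (e x)) => [[a|m]|] // /existsP [jj /andP []]; rewrite ffunE /= => E3 /pbE [j [p [Ej [E4 E5]]]].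
      apply/(addr_prefix Ht Ex Ey Vx Vy); right; exists a, j, p; split => //.
      by rewrite Ej.
- move=> [[i x] y]; rewrite !ffunE /=.
  rewrite (ex_labf (e := e)); last by move=> p; rewrite ffunE.
  have [Ex Vx] := Hw x (ltn_ord x); have [Ey Vy] := Hw y (ltn_ord y).
  apply/idP/idP.
  + move/eqP/(addr_succ Ht Ex Ey Vy).
    rewrite {1}/Xst; case Ea: (t (e x)) => [[a|m]|]; last 2 first.
    - by rewrite step_dead // => E; case: (valid_Xst Vy); rewrite -E.
    - by rewrite step_dead // => E; case: (valid_Xst Vy); rewrite -E.
    rewrite step_eq Ea.
    case El: (L a (rcons (uu x) i)) => [[g|j]|].
    * have Vx' : valid (e x) (rcons (uu x) i).
        move: Vx => [H1 [H2 _]]; split => //; split => //; rewrite Ea; by exists g.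
      have -> : FInside n (e x) (rcons (uu x) i) = Xst (e x) (rcons (uu x) i) by rewrite /Xst Ea.
      move/(Xst_inj Ht Vx' Vy) => [-> ->]; by rewrite !eqxx.
    * move=> E.
      have Hd : Xst (rcons (e x) j) [::] <> FDead n by rewrite E; exact: valid_Xst Vy.
      have Vj := valid_child Ea Vx El Hd.
      have [E1 E2] := Xst_inj Ht Vj Vy E.
      apply/andP; split; last by rewrite -E2.
      apply/existsP; exists (widen_ord (ltnW (HM a)) j); by rewrite ffunE /= eqxx -E1 eqxx.
    * by move=> E; case: (valid_Xst Vy); rewrite -E.
  + case Ea: (t (e x)) => [[a|m]|] //.
    move=> H; apply/eqP/(addr_succ Ht Ex Ey Vy); rewrite {1}/Xst Ea step_eq Ea.
    move: H; case El: (L a (rcons (uu x) i)) => [[g|j]|] //.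
    * by move=> /andP [/eqP -> /eqP ->]; rewrite /Xst Ea.
    * move=> /andP [/existsP [jj /andP [/eqP Ejj]]]; rewrite ffunE /= => /eqP E1 /eqP ->.
      by rewrite E1 Ejj.
- move=> x; rewrite !ffunE /=.
  have [Ex Vx] := Hw x (ltn_ord x).
  apply/idP/idP => [/eqP /(addr_root Ht Ex Vx) [-> ->]|/andP [/eqP E1 /eqP E2]].
  + by rewrite !eqxx.
  + by apply/eqP/(addr_root Ht Ex Vx).
Qed.
End Decode.

Section Comp.
Variables (Sigma Gamma : finType) (arS : Sigma -> nat) (arG : Gamma -> nat)
    (phi : forall k, Tn arS k -> Tn arG k) (n N M B : nat).
Hypothesis HM : forall a, arS a < M.

Definition tT (t : rtree Sigma n) q e :=
  @tp (A0T Sigma n N M) N (fun v => t v <> None) (@atomT Sigma Gamma arS arG phi n N M t) q e.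
Definition Sof (t : rtree Sigma n) := flat (Tphi phi t).
Definition tS (t : rtree Sigma n) q w := tpG N B (Sof t) q w.

Lemma valid_transfer (t t' : rtree Sigma n) e e' (x : 'I_N) u :
  atomT phi N M t e = atomT phi N M t' e' -> valid phi t (e x) u -> t' (e' x) <> None ->
  valid phi t' (e' x) u.
Proof.
move=> Ea [H1 [H2 H3]] H1'; split => //; split.
- have := congr1 (fun a : A0T Sigma n N M => a.2 x) Ea; rewrite /= !ffunE => E.
  have : pb (Alive phi t (e x)) by apply/pbE.
  by rewrite E => /pbE.
- move: H3; case E: (t (e x)) => [[a|m]|] //.
  + have := congr1 (fun a0 : A0T Sigma n N M => a0.1.1.1.1.1.1.1 (x, a)) Ea; rewrite /= !ffunE /= => E'.
    have : pb (t (e x) = Some (inl a)) by apply/pbE.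
    by rewrite E' => /pbE ->.
  + have := congr1 (fun a0 : A0T Sigma n N M => a0.1.1.1.1.1.1.2 (x, m)) Ea; rewrite /= !ffunE /= => E'.
    have : pb (t (e x) = Some (inr m)) by apply/pbE.
    by rewrite E' => /pbE ->.
Qed.

Definition envrel (t : rtree Sigma n) e uu w :=
  forall x, x < N -> st phi t (w x) = Xst t (e x) (uu x) /\ valid phi t (e x) (uu x).

Lemma envrel_upd t e uu w (x : 'I_N) v u w0 :
  envrel t e uu w -> st phi t w0 = Xst t v u -> valid phi t v u ->
  envrel t (upd e x v) (upd uu x u) (upd w x w0).
Proof. move=> H E V y Hy; rewrite /upd; case: eqP => _ //; exact: H. Qed.

Lemma comp_tp q : forall (t t' : rtree Sigma n), is_tree arS t -> is_tree arS t' ->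
  forall e e' uu w w', envrel t e uu w -> envrel t' e' uu w' ->
  tT t q e = tT t' q e' -> tS t q w = tS t' q w'.
Proof.
elim: q => [|q IH] t t' Ht Ht' e e' uu w w' Hw Hw' Et.
- rewrite /tS /tpG /=; rewrite (decode_ok B HM Ht Hw) (decode_ok B HM Ht' Hw').
  exact: (congr1 (fun a => @dec _ _ _ _ phi n N M B a uu) Et).
- have Ea := congr1 (@tatom _ _ _) Et; rewrite /tT !tatom_tp in Ea.
  have key : forall t t' (Ht : is_tree arS t) (Ht' : is_tree arS t') e e' w w',
      envrel t e uu w -> envrel t' e' uu w' -> tT t q.+1 e = tT t' q.+1 e' ->
      forall (x : 'I_N) sg, (exists w0, Sof t w0 <> None /\ tS t q (upd w x w0) = sg) ->
      (exists w0, Sof t' w0 <> None /\ tS t' q (upd w' x w0) = sg).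
    move=> t1 t1' Ht1 Ht1' e1 e1' w1 w1' Hw1 Hw1' Et1 x sg [w0 [Hd Es]].
    move/(st_dom phi Ht1): Hd => Hd.
    have [v0 [u0 [E0 V0]]] := st_valid Ht1 Hd.
    have [v0' [Hv0' Et0]] := tp_S_set (x := x) Et1 (proj1 V0) (erefl _).
    have Ea0 := congr1 (@tatom _ _ _) Et0; rewrite !tatom_tp in Ea0.
    have V0' : valid phi t1' v0' u0.
      have := @valid_transfer t1 t1' (upd e1 x v0) (upd e1' x v0') x u0 (esym Ea0).
      by rewrite /upd eqxx; apply.
    have [w0' E0'] := reach_valid Ht1' V0'.
    exists w0'; split.
      apply/(st_dom phi Ht1'); rewrite E0'; exact: valid_Xst V0'.
    rewrite -Es; apply/esym/(IH t1 t1' Ht1 Ht1' (upd e1 x v0) (upd e1' x v0') (upd uu x u0)).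
    + exact: envrel_upd.
    + exact: envrel_upd.
    + by rewrite /tT Et0.
  rewrite /tS /tpG /=; congr pair.
  + rewrite (decode_ok B HM Ht Hw) (decode_ok B HM Ht' Hw'); by rewrite Ea.
  + apply/ffunP => x; rewrite !ffunE; apply/setP => sg; rewrite !inE.
    apply/pbP/pbP.
    * exact: (key t t' Ht Ht' e e' w w' Hw Hw' Et x sg).
    * exact: (key t' t Ht' Ht e' e w' w Hw' Hw (esym Et) x sg).
Qed.
End Comp.

Section Lit.
Variables (A : Type) (n : nat) (t : rtree A n).
Definition lit (b : bool) (f : fo A n) := if b then f else fneg f.
Lemma lit_ok e f (c b : bool) : (sat t e f <-> c) -> (sat t e (lit b f) <-> b = c).
Proof.
move=> H; rewrite /lit; case: b; case: c H => H; split => Hx /=.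
all: try reflexivity.
all: try (exfalso; apply Hx; apply/H; reflexivity).
all: try (have := proj1 H Hx; discriminate).
all: try discriminate.
all: try (apply/H; reflexivity).
all: move=> Hs; have := proj1 H Hs; discriminate.
Qed.
Definition falpha (K : finType) (F : {ffun K -> bool}) (g : K -> fo A n) :=
  bigand (map (fun k => lit (F k) (g k)) (enum K)).
Lemma falpha_ok e (K : finType) (F : {ffun K -> bool}) (g : K -> fo A n) (G : K -> bool) :
  (forall k, sat t e (g k) <-> G k) -> (sat t e (falpha F g) <-> F = [ffun k => G k]).
Proof.
move=> H; rewrite /falpha sat_bigand; split.
- move=> H1; apply/ffunP => k; rewrite ffunE.
  apply: (proj1 (lit_ok (F k) (H k))); apply: H1; by rewrite mem_enum.
- move=> -> k _; apply: (proj2 (lit_ok _ (H k))); by rewrite ffunE.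
Qed.
Lemma fv_falpha N (K : finType) (F : {ffun K -> bool}) (g : K -> fo A n) :
  (forall k, fvlt N (g k)) -> fvlt N (falpha F g).
Proof.
move=> H; apply: fv_bigand => k; rewrite /lit; case: (F k); [exact: H | apply: fv_neg; exact: H].
Qed.
Lemma fv_ex N N' z (g : fo A n) : fvlt N' g -> (forall y, y < N' -> y != z -> y < N) -> fvlt N (FEx z g).
Proof. move=> H1 H2 y /= /andP [Hy /H1 Hy']; exact: H2. Qed.
End Lit.

Section Alpha.
Variables (Sigma Gamma : finType) (arS : Sigma -> nat) (arG : Gamma -> nat)
    (phi : forall k, Tn arS k -> Tn arG k) (n N M : nat).
Hypothesis HM : forall a, arS a < M.

Definition gdir (j x y : nat) : fo Sigma n := FEx N (fand (FSucc Sigma n j x N) (FLe Sigma n N y)).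
Definition galive (x : nat) : fo Sigma n :=
  fneg (FEx N (bigor (map (fun p : Sigma * 'I_M =>
     if pb (occ phi p.1 p.2) then FFalse Sigma n
     else fand (FLab n p.1 N) (FEx N.+1 (fand (FSucc Sigma n p.2 N N.+1) (FLe Sigma n N.+1 x)))) (enum {: Sigma * 'I_M})))).

Definition alphaT (a : A0T Sigma n N M) : fo Sigma n :=
 fand (falpha a.1.1.1.1.1.1.1 (fun p : 'I_N * Sigma => FLab n p.2 p.1))
 (fand (falpha a.1.1.1.1.1.1.2 (fun p : 'I_N * 'I_n => FVarl Sigma p.2 p.1))
 (fand (falpha a.1.1.1.1.1.2 (fun p : 'I_N * 'I_N => FEq Sigma n p.1 p.2))
 (fand (falpha a.1.1.1.1.2 (fun p : 'I_N * 'I_N => FLe Sigma n p.1 p.2))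
 (fand (falpha a.1.1.1.2 (fun p : 'I_M * 'I_N * 'I_N => FSucc Sigma n p.1.1 p.1.2 p.2))
 (fand (falpha a.1.1.2 (fun x : 'I_N => FRoot Sigma n x))
 (fand (falpha a.1.2 (fun p : 'I_M * 'I_N * 'I_N => gdir p.1.1 p.1.2 p.2))
       (falpha a.2 (fun x : 'I_N => galive x)))))))).

Lemma fv_alphaT a : fvlt N (alphaT a).
Proof.
rewrite /alphaT.
have H2 : forall (x y : 'I_N) z, z == x -> z < N by move=> x y z /eqP ->.
repeat apply: fv_and; apply: fv_falpha.
- by move=> [x c] z /= /eqP ->.
- by move=> [x c] z /= /eqP ->.
- by move=> [x y] z /= /orP [/eqP ->|/eqP ->].
- by move=> [x y] z /= /orP [/eqP ->|/eqP ->].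
- by move=> [[j x] y] z /= /orP [/eqP ->|/eqP ->].
- by move=> x z /= /eqP ->.
- move=> [[j x] y]; apply: (@fv_ex _ _ _ N.+1).
  + apply: fv_and => z /= /orP [/eqP ->|/eqP ->] //; apply: leq_trans (ltn_ord _) _; exact: leqnSn.
  + move=> z; rewrite ltnS leq_eqVlt => /orP [/eqP ->|//]; by rewrite eqxx.
- move=> x; apply: fv_neg; apply: (@fv_ex _ _ _ N.+1).
  + apply: fv_bigor => p; case: pb => //.
    apply: fv_and; first by move=> z /= /eqP ->.
    apply: (@fv_ex _ _ _ N.+2).
    * apply: fv_and => z /= /orP [/eqP ->|/eqP ->] //.
      apply: leq_trans (ltn_ord _) _; exact: leq_trans (leqnSn _) (leqnSn _).
    * move=> z; rewrite ltnS leq_eqVlt => /orP [/eqP ->|//]; by rewrite eqxx.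
  + move=> z; rewrite ltnS leq_eqVlt => /orP [/eqP ->|//]; by rewrite eqxx.
Qed.

Variables (t : rtree Sigma n) (Ht : is_tree arS t).

Lemma sat_gdir e (j : nat) (x y : 'I_N) : envok N t e ->
  (sat t e (gdir j x y) <-> prefix (rcons (e x) j) (e y)).
Proof.
move=> He; rewrite /gdir.
have Hx : (x == N :> nat) = false by apply/negbTE; rewrite neq_ltn ltn_ord.
have Hy : (y == N :> nat) = false by apply/negbTE; rewrite neq_ltn ltn_ord.
split.
- rewrite sat_ex => [[v [Hv /sat_and [/= E1 E2]]]]; move: E1 E2; rewrite /upd /= eqxx Hx Hy => <-; by [].
- move=> H; exists (rcons (e x) j); split.
  + apply: (tree_prefix Ht _ H); exact: He.
  + apply/sat_and; by rewrite /= eqxx Hx Hy.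
Qed.

Lemma sat_galive e (x : 'I_N) : envok N t e -> (sat t e (galive x) <-> Alive phi t (e x)).
Proof.
move=> He; rewrite /galive sat_neg sat_ex.
have Hx : (x == N :> nat) = false by apply/negbTE; rewrite neq_ltn ltn_ord.
have Hx' : (x == N.+1 :> nat) = false.
  by apply/negbTE; rewrite neq_ltn (leq_trans (ltn_ord x) (leqnSn _)).
have HN : (N == N.+1) = false by rewrite eqn_leq ltnn andbF.
split.
- move=> H v0 j Hp a Ea; apply: NNPP => Hn; apply: H.
  have Hd : t (rcons v0 j) <> None by apply: (tree_prefix Ht _ Hp); exact: He.
  have [a' [Ea' Hj]] := tree_child Ht Hd; rewrite Ea in Ea'; case: Ea' => Eaa; subst a'.
  have HjM : j < M := ltn_trans Hj (HM a).
  exists v0; split; first by rewrite Ea.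
  apply/sat_bigor; exists (a, Ordinal HjM); first by rewrite mem_enum.
  have -> : pb (occ phi (a, Ordinal HjM).1 (a, Ordinal HjM).2) = false.
    by apply/negbTE/negP => /pbE.
  apply/sat_and; split; first by rewrite /= /upd eqxx.
  apply/sat_ex; exists (rcons v0 j); split => //.
  by apply/sat_and; rewrite /= /upd eqxx HN eqxx Hx Hx'.
- move=> Al [v0 [Hv0 H]]; move/sat_bigor: H => [[a jj] _].
  case Eo: (pb (occ phi (a, jj).1 (a, jj).2)) => // /sat_and [H1 H2].
  move: H1; rewrite /= /upd eqxx => Ea.
  move/sat_ex: H2 => [v1 [Hv1 /sat_and [H3 H4]]].
  move: H3 H4; rewrite /= /upd eqxx HN eqxx Hx Hx' => E1 E2; subst v1.
  have Ho := Al v0 jj E2 a Ea.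
  by move: Eo => /negbT /negP; apply; apply/pbE.
Qed.
Lemma alphaT_ok e a : envok N t e -> (sat t e (alphaT a) <-> atomT phi N M t e = a).
Proof.
move=> He; rewrite /alphaT !sat_and.
rewrite (falpha_ok _ _ (G := fun p : 'I_N * Sigma => pb (t (e p.1) = Some (inl p.2)))); last first.
  by move=> p /=; rewrite pbE.
rewrite (falpha_ok _ _ (G := fun p : 'I_N * 'I_n => pb (t (e p.1) = Some (inr p.2)))); last first.
  by move=> p /=; rewrite pbE.
rewrite (falpha_ok _ _ (G := fun p : 'I_N * 'I_N => e p.1 == e p.2)); last first.
  by move=> p /=; split => [->|/eqP].
rewrite (falpha_ok _ _ (G := fun p : 'I_N * 'I_N => prefix (e p.1) (e p.2))); last by [].
rewrite (falpha_ok _ _ (G := fun p : 'I_M * 'I_N * 'I_N => e p.2 == rcons (e p.1.2) p.1.1)); last first.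
  by move=> p /=; split => [->|/eqP].
rewrite (falpha_ok _ _ (G := fun x : 'I_N => e x == [::])); last first.
  by move=> p /=; split => [->|/eqP].
rewrite (falpha_ok _ _ (G := fun p : 'I_M * 'I_N * 'I_N => prefix (rcons (e p.1.2) p.1.1) (e p.2))); last first.
  by move=> p; rewrite sat_gdir.
rewrite (falpha_ok _ _ (G := fun x : 'I_N => pb (Alive phi t (e x)))); last first.
  by move=> x; rewrite sat_galive // pbE.
case: a => [[[[[[[lab var] eqv] le] succ] root] dir] alive] /=.
rewrite /atomT /atomG; split.
- by move=> [-> [-> [-> [-> [-> [-> [-> ->]]]]]]].
- by case=> <- <- <- <- <- <- <- <-.
Qed.
End Alpha.

Section T0.
Variables (Sigma Gamma : finType) (arS : Sigma -> nat) (arG : Gamma -> nat)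
    (phi : forall k, Tn arS k -> Tn arG k) (n : nat).
Variables (t : rtree Sigma n) (Ht : is_tree arS t).

Lemma T0_tree : is_tree (@TA_ar Sigma arS) (T0 arS t).
Proof.
split.
  have [a Ea] := tree_root Ht; exists (existT _ (arS a) (sing arS a)); by rewrite /T0 Ea.
split.
- move=> v i; split.
  + move=> Hd; have Hd' : t (rcons v i) <> None.
      by move=> E; apply: Hd; rewrite /T0 E.
    have [b [Eb Hi]] := tree_child Ht Hd'.
    exists (inl (existT _ (arS b) (sing arS b))); by rewrite /T0 Eb.
  + move=> [l [El Hi]]; move: El Hi; rewrite /T0; case Ev: (t v) => [[b|m]|] // [<-] /= Hi; last by rewrite ltn0 in Hi.
    have Hd := tree_child_inv Ht Ev Hi.
    by case E: (t (rcons v i)) Hd => [[c|m]|].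
- move=> v w j; rewrite /T0; case Ev: (t v) => [[a|m]|] //; case Ew: (t w) => [[b|m']|] // [E1] [E2].
  subst; exact: (tree_var Ht Ev Ew).
Qed.

Lemma walkT0 w : foldl (flat_step (T0 arS t)) (FInside n [::] [::]) w =
  match t w with Some (inl _) => FInside n w [::] | Some (inr m) => FAtVar m | None => FDead n end.
Proof.
elim/last_ind: w => [|w i IH].
  by have [a Ea] := tree_root Ht; rewrite /= Ea.
rewrite foldl_rcons IH.
have Hnone : forall (H : forall a, t w = Some (inl a) -> i < arS a -> False), t (rcons w i) = None.
  move=> H; case E: (t (rcons w i)) => // [l].
  have [a [Ea Hi]] : exists a, t w = Some (inl a) /\ i < arS a by apply: (tree_child Ht); rewrite E.
  by case: (H a Ea Hi).
case Ew: (t w) => [[a|m]|].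
- rewrite /flat_step /T0 Ew /= /sing_f /=.
  case: insubP => [j Hj Ej|Hi].
  + by rewrite Ej; case: (t (rcons w i)) => [[b|m]|].
  + rewrite Hnone //; move=> a'; rewrite Ew => [[<-]] Hi'; by rewrite Hi' in Hi.
- by rewrite Hnone // => a'; rewrite Ew.
- by rewrite Hnone // => a'; rewrite Ew.
Qed.

Lemma flat_T0 : flat (T0 arS t) = t.
Proof.
apply: functional_extensionality => w; rewrite /flat walkT0.
by case Ew: (t w) => [[a|m]|] //; rewrite /T0 Ew.
Qed.
End T0.

Lemma phi_Sof (Sigma Gamma : finType) (arS : Sigma -> nat) (arG : Gamma -> nat)
    (phi : forall k, Tn arS k -> Tn arG k) (n : nat) (Hm : talg_morph phi) (t : Tn arS n) :
  sval (phi n t) = flat (Tphi phi (sval t)).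
Proof.
case: t => tf Htf /=.
have Ef := flat_T0 Htf.
have H : is_tree arS (flat (sval (exist _ (T0 arS tf) (T0_tree Htf) : Tn (@TA_ar Sigma arS) n))).
  by rewrite /= Ef.
have := Hm n (exist _ (T0 arS tf) (T0_tree Htf)) H; rewrite /= => <-.
congr (sval (phi n _)).
move: H; rewrite /= Ef => H; by rewrite (proof_irrelevance _ H Htf).
Qed.

Fixpoint closeR (A : Type) n (k : nat) (g : fo A n) : fo A n :=
  match k with 0 => g | k'.+1 => FEx k' (fand (FRoot A n k') (closeR k' g)) end.

Lemma free_closeR (A : Type) n k (g : fo A n) y : free y (closeR k g) -> free y g /\ k <= y.
Proof.
elim: k => [|k IH] /=; first by [].
rewrite orbF => /andP [Hy /orP [/eqP Ey|]]; first by rewrite Ey eqxx in Hy.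
rewrite orbF => /IH [H1 H2].
split => //; rewrite ltn_neqAle H2 andbT; by rewrite eq_sym.
Qed.

Lemma upd_nil k : upd (fun _ : nat => [::] : seq nat) k [::] = (fun _ => [::]).
Proof. apply: functional_extensionality => y; rewrite /upd; by case: eqP. Qed.

Lemma sat_closeR (A : Type) n (t : rtree A n) k (g : fo A n) : t [::] <> None ->
  (sat t (fun _ => [::]) (closeR k g) <-> sat t (fun _ => [::]) g).
Proof.
move=> Hr; elim: k => [|k IH] //.
change (sat t (fun _ => [::]) (FEx k (fand (FRoot A n k) (closeR k g))) <-> sat t (fun _ => [::]) g).
rewrite sat_ex; split.
- move=> [v [Hv /sat_and [Hv0 HC]]].
  have Ev : v = [::] by move: Hv0; rewrite /= /upd eqxx.
  by subst v; rewrite upd_nil IH in HC.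
- move=> H; exists [::]; split => //; apply/sat_and; rewrite upd_nil; split => //.
  by apply/IH.
Qed.

Theorem proposition10p6 (Sigma Gamma : finType) (arS : Sigma -> nat) (arG : Gamma -> nat)
    (phi : forall k, Tn arS k -> Tn arG k) :
  talg_morph phi ->
  forall (n : nat) (K : Tn arG n -> Prop),
    fo_definable K -> fo_definable (fun t : Tn arS n => K (phi n t)).
Proof.
move=> Hm n K [f [Hsent HK]].
pose N := (maxv f).+1. pose B := (maxs f).+1. pose q := depth f.
pose M := (\max_(a : Sigma) arS a).+1.
have HM : forall a, arS a < M by move=> a; rewrite ltnS; exact: (leq_bigmax a).
pose e0 := fun _ : nat => [::] : seq nat.
pose Good := [set tau : typ (A0T Sigma n N M) N q |
   pb (exists t : Tn arS n, tT phi N M (sval t) q e0 = tau /\ K (phi n t))].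
pose body := bigor (map (fun tau => chi (@alphaT _ _ _ _ phi n N M) tau) (enum Good)).
have Hroot : forall t : Tn arS n, sval t [::] <> None.
  by move=> t; have [a Ea] := tree_root (proj2_sig t); rewrite Ea.
have Henv : forall t : Tn arS n, envok N (sval t) e0.
  move=> t x _; exact (Hroot t).
have Halpha : forall t : Tn arS n, forall e a, envok N (sval t) e ->
    (sat (sval t) e (alphaT phi a) <-> atomT phi N M (sval t) e = a).
  move=> t e a He; exact: (alphaT_ok phi HM (proj2_sig t)).
exists (closeR N body); split.
- move=> y; apply/negP => /free_closeR [H1 H2].
  have : y < N.
    move: H1; apply: fv_bigor => tau; apply: fv_chi => a; exact: fv_alphaT.
  by rewrite ltnNge H2.
- move=> t; rewrite sat_closeR; last exact: (Hroot t).
  rewrite /body sat_bigor; split.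
  + move=> HKt; exists (tT phi N M (sval t) q e0).
    * rewrite mem_enum inE; apply/pbE; by exists t.
    * apply/(hint (Halpha t)) => //; exact: Henv.
  + move=> [tau]; rewrite mem_enum inE => /pbE [t0 [Et0 HK0]].
    move/(hint (Halpha t) tau (Henv t)) => Et.
    have Etyp : tT phi N M (sval t0) q e0 = tT phi N M (sval t) q e0 by rewrite Et0; symmetry; exact Et.
    have Hrel : forall t : Tn arS n, envrel phi N (sval t) e0 e0 e0.
      move=> t1 x _; split; [exact: (st_nil phi (proj2_sig t1)) | exact: (valid_root phi (proj2_sig t1))].
    have Ecomp := comp_tp B HM (proj2_sig t0) (proj2_sig t) (Hrel t0) (Hrel t) Etyp.
    apply/HK; rewrite phi_Sof //.
    have := HK (phi n t0); rewrite phi_Sof // => /proj1 /(_ HK0).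
    have Hok : okf N B f by exact: okf_max.
    by rewrite (G1 Hok (leqnn q) Ecomp).
Qed.
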